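(* Let $\Gamma=(V,E)$ be a graph, for each $v\in V$ let $C_v$ be a left LCM monoid, and let $C=\Gamma_{v\in V}C_v$. If $x,y\in C_v$ for some $v\in V$, then $C_vx\cap C_vy=\emptyset$ if and only if $Cx\cap Cy=\emptyset$. Moreover, if $C_vx\cap C_vy=C_vz$ with $z\in C_v$, then $Cx\cap Cy=Cz$.
   Context: A graph $\Gamma=(V,E)$ has vertex set $V$ and irreflexive symmetric edge relation $E$. The graph product $\Gamma_{v\in V}C_v$ of pairwise disjoint monoids $C_v$ is the quotient of their free product by the congruence generated by all $(mn,nm)$ with $m\in C_u$, $n\in C_v$, $(u,v)\in E$; each $C_v$ is identified with its image in $C$. A left LCM monoid is a right cancellative monoid in which the intersection of any two principal left ideals is empty or principal. *)

(* Defs.v *)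
From Stdlib Require Import List Relations.
Import ListNotations.
Set Implicit Arguments.

Record monoid := Monoid {
  mcar :> Type;
  mmul : mcar -> mcar -> mcar;
  mone : mcar;
  mmulA : forall a b c, mmul a (mmul b c) = mmul (mmul a b) c;
  mmul1l : forall a, mmul mone a = a;
  mmulr1 : forall a, mmul a mone = a
}.
Arguments mmul {m} _ _.

Definition in_lideal {M : monoid} (x w : M) : Prop := exists a : M, w = mmul a x.

Definition right_cancellative (M : monoid) : Prop :=
  forall a b c : M, mmul a c = mmul b c -> a = b.

Definition left_LCM (M : monoid) : Prop :=
  right_cancellative M /\
  forall x y : M,
    (forall w : M, ~ (in_lideal x w /\ in_lideal y w)) \/
    (exists z : M, forall w : M, in_lideal x w /\ in_lideal y w <-> in_lideal z w).

(* Graph products.  Vertices V, edge relation E, vertex monoids C v.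
   The disjoint union of the C v is the sigma type {v : V & C v};
   the free monoid on it is list of letters. *)
Section GraphProduct.
Variables (V : Type) (E : V -> V -> Prop) (C : V -> monoid).

Definition letter := {v : V & mcar (C v)}.
Definition word := list letter.

Definition ltr {v : V} (a : C v) : letter := existT (fun u => mcar (C u)) v a.

Inductive gp_step : word -> word -> Prop :=
  | gp_mul : forall (l r : word) (v : V) (a b : C v),
      gp_step (l ++ ltr a :: ltr b :: r) (l ++ ltr (mmul a b) :: r)
  | gp_one : forall (l r : word) (v : V),
      gp_step (l ++ ltr (mone (C v)) :: r) (l ++ r)
  | gp_comm : forall (l r : word) (u v : V) (m : C u) (n : C v),
      E u v -> gp_step (l ++ ltr m :: ltr n :: r) (l ++ ltr n :: ltr m :: r).

(* The congruence on the free monoid generated by these relations;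
   the graph product C = Γ_{v ∈ V} C_v is word modulo gp_eq,
   with multiplication induced by concatenation. *)
Definition gp_eq : word -> word -> Prop := clos_refl_sym_trans word gp_step.

Definition gp_of {v : V} (x : C v) : word := [ltr x].

Definition gp_in_lideal (x w : word) : Prop := exists u : word, gp_eq w (u ++ x).

End GraphProduct.

(* Main.v *)
Require Import Defs.
From Stdlib Require Import List Relations Classical ClassicalEpsilon Eqdep FunctionalExtensionality Lia Arith.
Import ListNotations.

Section GP.
Context (V : Type) (E : V -> V -> Prop)
  (E_sym : forall u v, E u v -> E v u) (E_irr : forall v, ~ E v v)
  (C : V -> monoid).

Definition dec (P : Prop) : {P} + {~P} := excluded_middle_informative P.

Fixpoint fine (x : V) (r : list V) : Prop :=
  match r with [] => True | y :: r' => (E x y /\ fine x r') \/ (~ E x y /\ y <> x) end.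
Fixpoint NoAdj (r : list V) : Prop :=
  match r with [] => True | x :: r' => fine x r' /\ NoAdj r' end.

Lemma fine_notin x r : ~ In x r -> fine x r.
Proof.
  induction r as [|a r IH]; simpl; auto. intros Hn.
  destruct (classic (E x a)). left; split; auto.
  right; split; auto.
Qed.

Lemma fine_remove x a u b : fine x (a ++ u :: b) -> Forall (E u) b -> fine x (a ++ b).
Proof.
  induction a as [|y a IH]; simpl.
  - intros [[_ Hf]|[Hxu _]] Hb; auto. apply fine_notin. intro Hin.
    rewrite Forall_forall in Hb. apply Hb in Hin. apply Hxu. apply E_sym; auto.
  - intros [[H1 H2]|[H1 H2]] Hb; [left; split; auto | right; auto].
Qed.

Lemma NoAdj_remove a u b : NoAdj (a ++ u :: b) -> Forall (E u) b -> NoAdj (a ++ b).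
Proof.
  induction a as [|x a IH]; simpl; [tauto|].
  intros [Hf Hn] Hb; split; [eapply fine_remove; eauto | eauto].
Qed.

Lemma fine_app1 y r x : fine y r -> (Forall (E y) r -> x <> y) -> fine y (r ++ [x]).
Proof.
  induction r as [|a r IH]; simpl; intros H H0.
  - destruct (classic (E y x)); [left; split; auto | right; split; auto].
  - destruct H as [[H1 H2]|[H1 H2]]; [left; split | right; auto].
    + exact H1.
    + apply IH; [exact H2|]. intro Hf; apply H0; constructor; auto.
Qed.

Lemma NoAdj_app1 r x : NoAdj r -> (forall a b, r = a ++ x :: b -> Forall (E x) b -> False) ->
  NoAdj (r ++ [x]).
Proof.
  induction r as [|a r IH]; simpl.
  - intros _ _; split; auto.
  - intros [Hf Hn] H. split.
    + apply fine_app1; auto. intros Hall Heq. subst x. apply (H [] r); auto.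
    + apply IH; auto. intros a0 b Heq Hb. apply (H (a :: a0) b); auto. simpl; congruence.
Qed.

Lemma fine_block u m b : Forall (E u) m -> fine u (m ++ u :: b) -> False.
Proof.
  induction m as [|x m IH]; simpl; intros Hm.
  - intros [[H _]|[_ H]]; [apply (E_irr u) | apply H]; auto.
  - inversion Hm; subst. intros [[_ H]|[H _]]; eauto.
Qed.

Lemma NoAdj_noexp a u b : NoAdj (a ++ u :: b) -> Forall (E u) b ->
  forall a' b', a ++ b = a' ++ u :: b' -> Forall (E u) b' -> False.
Proof.
  induction a as [|x a IH]; simpl; intros H Hb a' b' Heq Hb'.
  - subst b. rewrite Forall_forall in Hb. apply (E_irr u). apply Hb.
    apply in_or_app; right; left; auto.
  - destruct a' as [|y a1]; simpl in Heq; inversion Heq; subst.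
    + destruct H as [Hf _]. apply Forall_app in Hb' as [Ha _].
      eapply fine_block; eauto.
    + destruct H as [_ H]. eapply IH; eauto.
Qed.

Notation L := (letter C).
Definition vx (l : L) : V := projT1 l.
Definition St := V -> V -> list L.
Definition inb (y z : V) (l : L) : bool := if dec (vx l = y \/ vx l = z) then true else false.
Definition proj (w : list L) : St := fun y z =>
  if dec (E y z) then [] else filter (inb y z) w.
Definition hasTail (u : V) (t : C u) (P : St) : Prop :=
  forall x, ~ E u x -> exists l, P u x = l ++ [ltr C t].
Definition tailv (P : St) (u : V) : option (C u) :=
  match dec (exists t, hasTail u t P) with
  | left H => Some (proj1_sig (constructive_indefinite_description _ H))
  | right _ => None end.
Definition modify (u : V) (f : list L -> list L) (P : St) : St := fun y z =>
  if dec ((y = u \/ z = u) /\ ~ E y z) then f (P y z) else P y z.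
Definition op {u : V} (a : C u) (o : option (C u)) : list L -> list L :=
  match o with
  | Some t => if dec (mmul t a = mone (C u)) then (@removelast L)
              else (fun l => removelast l ++ [ltr C (mmul t a)])
  | None => if dec (a = mone (C u)) then (fun l => l) else (fun l => l ++ [ltr C a])
  end.
Definition act (l : L) (P : St) : St :=
  match l with existT _ u a => modify u (op a (tailv P u)) P end.
Definition nonid (l : L) : Prop := match l with existT _ u a => a <> mone (C u) end.
Definition Red (w : list L) := Forall nonid w /\ NoAdj (map vx w).

Lemma ltr_inj u (t t' : C u) : ltr C t = ltr C t' -> t = t'.
Proof. unfold ltr. apply inj_pairT2. Qed.

Lemma tail_unique u t t' P : hasTail u t P -> hasTail u t' P -> t = t'.
Proof.
  intros H1 H2. destruct (H1 u (E_irr u)) as [l1 e1]. destruct (H2 u (E_irr u)) as [l2 e2].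
  rewrite e1 in e2. apply app_inj_tail in e2 as [_ e2]. apply ltr_inj; auto.
Qed.

Lemma tailv_Some P u t : hasTail u t P -> tailv P u = Some t.
Proof.
  intros H. unfold tailv. destruct (dec _) as [H'|H'].
  - destruct (constructive_indefinite_description _ H') as [t' Ht']; simpl.
    f_equal. eapply tail_unique; eauto.
  - exfalso; eauto.
Qed.

Lemma tailv_None P u : (forall t, ~ hasTail u t P) -> tailv P u = None.
Proof.
  intros H. unfold tailv. destruct (dec _) as [[t Ht]|H']; auto. exfalso; eapply H; eauto.
Qed.

Lemma tailv_some_spec P u t : tailv P u = Some t -> hasTail u t P.
Proof.
  unfold tailv. destruct (dec _) as [H'|H']; [|discriminate].
  destruct (constructive_indefinite_description _ H') as [t' Ht']; simpl. intros e; inversion e; subst; auto.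
Qed.

Lemma tailv_none_spec P u : tailv P u = None -> forall t, ~ hasTail u t P.
Proof.
  unfold tailv. destruct (dec _) as [H'|H']; [discriminate|]. intros _ t Ht; eauto.
Qed.

Lemma modify_comp u f g P : modify u f (modify u g P) = modify u (fun l => f (g l)) P.
Proof.
  apply functional_extensionality; intro y; apply functional_extensionality; intro z.
  unfold modify. destruct (dec _); auto.
Qed.

Lemma modify_id u P : modify u (fun l => l) P = P.
Proof.
  apply functional_extensionality; intro y; apply functional_extensionality; intro z.
  unfold modify. destruct (dec _); auto.
Qed.

Lemma modify_ext u f g P : (forall l, f l = g l) -> modify u f P = modify u g P.
Proof.
  intros H. apply functional_extensionality; intro y; apply functional_extensionality; intro z.
  unfold modify. destruct (dec _); auto.
Qed.

Lemma modify_comm u u' f g P : E u u' ->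
  modify u f (modify u' g P) = modify u' g (modify u f P).
Proof.
  intros Huu. apply functional_extensionality; intro y; apply functional_extensionality; intro z.
  unfold modify. destruct (dec ((y = u \/ z = u) /\ ~ E y z)) as [[H1 H2]|H1];
  destruct (dec ((y = u' \/ z = u') /\ ~ E y z)) as [[H3 H4]|H3]; auto.
  exfalso. destruct H1 as [->| ->]; destruct H3 as [e| e]; subst.
  - apply (E_irr u'); auto.
  - apply H2; auto.
  - apply H2; auto.
  - apply (E_irr u'); auto.
Qed.

Lemma hasTail_modify_indep u u' f P t : E u u' ->
  (hasTail u t (modify u' f P) <-> hasTail u t P).
Proof.
  intros Huu. unfold hasTail, modify.
  split; intros H x Hx; specialize (H x Hx); destruct (dec _) as [[[e|e] _]|_]; subst; auto;
  exfalso; [apply (E_irr u') | apply Hx | apply (E_irr u') | apply Hx]; auto.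
Qed.

Lemma tailv_modify_indep u u' f P : E u u' -> tailv (modify u' f P) u = tailv P u.
Proof.
  intros Huu. destruct (tailv P u) eqn:H.
  - apply tailv_some_spec in H. apply tailv_Some. apply hasTail_modify_indep; auto.
  - apply tailv_None. intros t Ht. apply hasTail_modify_indep in Ht; auto.
    eapply tailv_none_spec; eauto.
Qed.

Lemma inb_true y z l : (vx l = y \/ vx l = z) -> inb y z l = true.
Proof. intros H. unfold inb. destruct (dec _); auto; contradiction. Qed.
Lemma inb_false y z l : ~ (vx l = y \/ vx l = z) -> inb y z l = false.
Proof. intros H. unfold inb. destruct (dec _); auto; contradiction. Qed.

Lemma filter_none y z B : (forall l, In l B -> vx l <> y /\ vx l <> z) -> filter (inb y z) B = [].
Proof.
  induction B as [|l B IH]; simpl; intros H; auto.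
  unfold inb at 1. destruct (dec _) as [[e|e]|_].
  - exfalso. destruct (H l) as [h1 h2]; [left; auto|]; contradiction.
  - exfalso. destruct (H l) as [h1 h2]; [left; auto|]; contradiction.
  - apply IH; auto.
Qed.

Lemma filter_all y z M : (forall l, In l M -> vx l = y \/ vx l = z) -> filter (inb y z) M = M.
Proof.
  induction M as [|l M IH]; simpl; intros H; auto.
  unfold inb at 1. destruct (dec _) as [_|n].
  - f_equal; auto.
  - exfalso; apply n; auto.
Qed.

Lemma indep_out u B y z : Forall (fun l => E u (vx l)) B -> (y = u \/ z = u) -> ~ E y z ->
  forall l, In l B -> vx l <> y /\ vx l <> z.
Proof.
  intros HB Hyz Hn l Hl. rewrite Forall_forall in HB. specialize (HB l Hl).
  destruct Hyz; subst; split; intro e; rewrite e in HB.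
  - apply (E_irr u); auto.
  - apply Hn; auto.
  - apply Hn; auto.
  - apply (E_irr u); auto.
Qed.

Lemma proj_repl u A l B M : Forall (fun l => E u (vx l)) B -> vx l = u ->
  (forall m, In m M -> vx m = u) ->
  proj (A ++ M ++ B) = modify u (fun k => removelast k ++ M) (proj (A ++ l :: B)).
Proof.
  intros HB Hl HM.
  apply functional_extensionality; intro y; apply functional_extensionality; intro z.
  unfold modify. destruct (dec ((y = u \/ z = u) /\ ~ E y z)) as [[Hyz Hn]|Hno].
  - unfold proj. destruct (dec (E y z)) as [e|_]; [contradiction|].
    rewrite !filter_app. simpl.
    rewrite (filter_none y z B) by (apply (indep_out u); auto).
    rewrite (filter_all y z M) by (intros m Hm; rewrite (HM m Hm); destruct Hyz; [left|right]; auto).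
    rewrite inb_true by (rewrite Hl; destruct Hyz; [left|right]; auto).
    rewrite removelast_last, app_nil_r. reflexivity.
  - unfold proj. destruct (dec (E y z)) as [e|Hn]; auto.
    rewrite !filter_app. simpl.
    rewrite (filter_none y z M).
    + rewrite inb_false; auto. intros [e|e]; apply Hno; split; auto; [left|right]; congruence.
    + intros m Hm. rewrite HM by auto. split; intro e; subst; apply Hno; auto.
Qed.

Lemma proj_app1 u w l : vx l = u ->
  proj (w ++ [l]) = modify u (fun k => k ++ [l]) (proj w).
Proof.
  intros Hl.
  apply functional_extensionality; intro y; apply functional_extensionality; intro z.
  unfold modify, proj. rewrite filter_app. simpl.
  destruct (dec ((y = u \/ z = u) /\ ~ E y z)) as [[Hyz Hn]|Hno];
  destruct (dec (E y z)) as [e|Hn']; auto; try contradiction.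
  - rewrite inb_true; auto. rewrite Hl; destruct Hyz; [left|right]; auto.
  - rewrite inb_false; [apply app_nil_r|]. intros [e|e]; apply Hno; split; auto; [left|right]; congruence.
Qed.

Lemma syn_to_tail u t A B : Forall (fun l => E u (vx l)) B -> hasTail u t (proj (A ++ ltr C t :: B)).
Proof.
  intros HB x Hx. exists (filter (inb u x) A). unfold proj.
  destruct (dec (E u x)) as [e|_]; [contradiction|].
  rewrite filter_app. simpl. rewrite inb_true by (left; reflexivity).
  rewrite (filter_none u x B); auto. apply (indep_out u); auto.
Qed.

Lemma last_dep u w : (exists l, In l w /\ ~ E u (vx l)) ->
  exists A m B, w = A ++ m :: B /\ ~ E u (vx m) /\ Forall (fun l => E u (vx l)) B.
Proof.
  induction w as [|l w0 IH] using rev_ind.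
  - intros [l [[] _]].
  - intros [l' [Hin Hd]]. destruct (classic (E u (vx l))) as [He|Hn].
    + destruct IH as [A [m [B [e [Hm HB]]]]].
      * exists l'. split; auto. apply in_app_or in Hin as [Hin|[e|[]]]; auto.
        subst; contradiction.
      * exists A, m, (B ++ [l]). subst. split; [rewrite <- app_assoc; reflexivity|].
        split; auto. apply Forall_app; split; auto.
    + exists w0, l, []. auto.
Qed.

Lemma tail_to_syn u t w : hasTail u t (proj w) ->
  exists A B, w = A ++ ltr C t :: B /\ Forall (fun l => E u (vx l)) B.
Proof.
  intros H.
  destruct (H u (E_irr u)) as [l0 e0].
  assert (Hin : In (ltr C t) w).
  { unfold proj in e0. destruct (dec (E u u)) as [e|_]; [exfalso; apply (E_irr u); auto|].
    assert (In (ltr C t) (filter (inb u u) w)) by (rewrite e0; apply in_or_app; right; left; auto).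
    apply filter_In in H0; tauto. }
  destruct (last_dep u w) as [A [m [B [e [Hm HB]]]]].
  { exists (ltr C t); split; auto. }
  destruct (H (vx m) Hm) as [l1 e1].
  unfold proj in e1. destruct (dec (E u (vx m))) as [ee|_]; [contradiction|].
  rewrite e, filter_app in e1. simpl in e1. rewrite inb_true in e1 by (right; reflexivity).
  rewrite (filter_none u (vx m) B) in e1.
  2:{ apply (indep_out u); auto. }
  apply app_inj_tail in e1 as [_ e1]. subst m. exists A, B. auto.
Qed.

Lemma proj_remove u A l B : Forall (fun l => E u (vx l)) B -> vx l = u ->
  proj (A ++ B) = modify u (@removelast L) (proj (A ++ l :: B)).
Proof.
  intros HB Hl. rewrite (modify_ext u (@removelast L) (fun k => removelast k ++ [])).
  - apply (proj_repl u A l B []); auto. intros m [].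
  - intros; rewrite app_nil_r; auto.
Qed.

Lemma no_tail_after_remove u t w : Red w -> hasTail u t (proj w) ->
  forall t', ~ hasTail u t' (modify u (@removelast L) (proj w)).
Proof.
  intros [_ Hr] Ht t' Ht'. apply tail_to_syn in Ht as [A [B [e HB]]]. subst w.
  rewrite <- (proj_remove u A (ltr C t) B) in Ht' by auto.
  apply tail_to_syn in Ht' as [A' [B' [e' HB']]].
  rewrite map_app in Hr. simpl in Hr.
  apply (NoAdj_noexp (map vx A) u (map vx B) Hr) with (a' := map vx A') (b' := map vx B').
  - apply Forall_map; auto.
  - rewrite <- !map_app, e'. rewrite map_app. reflexivity.
  - apply Forall_map; auto.
Qed.

Lemma tail_nonid u t w : Red w -> hasTail u t (proj w) -> t <> mone (C u).
Proof.
  intros [Hn _] Ht. apply tail_to_syn in Ht as [A [B [e HB]]]. subst w.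
  apply Forall_app in Hn as [_ Hn]. inversion Hn; auto.
Qed.

Lemma act_red w l : Red w -> exists w', Red w' /\ act l (proj w) = proj w'.
Proof.
  intros Hr. destruct l as [u a]. simpl.
  destruct (tailv (proj w) u) as [t|] eqn:Ht.
  - apply tailv_some_spec, tail_to_syn in Ht as [A [B [e HB]]]. subst w. simpl.
    destruct (dec (mmul t a = mone (C u))) as [Hz|Hnz].
    + exists (A ++ B). split.
      * destruct Hr as [Hn Hna]. split.
        -- apply Forall_app in Hn as [H1 H2]. inversion H2; subst. apply Forall_app; auto.
        -- rewrite map_app in *. simpl in Hna. eapply NoAdj_remove; eauto. apply Forall_map; auto.
      * symmetry; apply proj_remove; auto.
    + exists (A ++ [ltr C (mmul t a)] ++ B). split.
      * destruct Hr as [Hn Hna]. split.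
        -- apply Forall_app in Hn as [H1 H2]. inversion H2; subst. apply Forall_app; split; auto.
           constructor; auto.
        -- rewrite !map_app in *. simpl in *. auto.
      * symmetry; apply (proj_repl u A (ltr C t) B); auto. intros m [<-|[]]; reflexivity.
  - simpl. destruct (dec (a = mone (C u))) as [Ha|Ha].
    + exists w. split; auto. apply modify_id.
    + exists (w ++ [ltr C a]). split.
      * destruct Hr as [Hn Hna]. split.
        -- apply Forall_app; split; auto.
        -- rewrite map_app. simpl. apply NoAdj_app1; auto.
           intros a0 b0 e Hb0. apply map_eq_app in e as [A [B' [e1 [e2 e3]]]].
           apply map_eq_cons in e3 as [m [B [e4 [e5 e6]]]]. rewrite e1, e4 in Ht.
           destruct m as [u' t']. unfold vx in e5; simpl in e5. subst u'.
           apply (tailv_none_spec _ _ Ht t'). apply syn_to_tail. apply Forall_map.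
           rewrite e6; auto.
      * symmetry; apply proj_app1; reflexivity.
Qed.

Definition P0 : St := fun _ _ => [].
Definition state (w : word C) : St := fold_left (fun P l => act l P) w P0.

Lemma state_snoc w l : state (w ++ [l]) = act l (state w).
Proof. unfold state. rewrite fold_left_app. reflexivity. Qed.

Lemma state_inv w : exists W, Red W /\ state w = proj W.
Proof.
  induction w as [|l w IH] using rev_ind.
  - exists []. split; [split; simpl; auto|].
    apply functional_extensionality; intro y; apply functional_extensionality; intro z.
    unfold proj, P0; simpl. destruct (dec _); auto.
  - destruct IH as [W [HW e]]. rewrite state_snoc, e. apply act_red; auto.
Qed.

Lemma act_ltr u (a : C u) P : act (ltr C a) P = modify u (op a (tailv P u)) P.
Proof. reflexivity. Qed.

Lemma rel_one W u : Red W -> act (ltr C (mone (C u))) (proj W) = proj W.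
Proof.
  intros HW. rewrite act_ltr. destruct (tailv (proj W) u) as [t|] eqn:Ht; simpl.
  - apply tailv_some_spec in Ht.
    destruct (dec _) as [e|_].
    + rewrite mmulr1 in e. exfalso; eapply tail_nonid; eauto.
    + rewrite mmulr1. pose proof Ht as Ht'. apply tail_to_syn in Ht' as [A [B [e HB]]]. subst W.
      rewrite <- (proj_repl u A (ltr C t) B [ltr C t]); auto. intros m [<-|[]]; reflexivity.
  - destruct (dec _) as [_|n]; [apply modify_id | exfalso; apply n; auto].
Qed.

Lemma hasTail_mod_self u f P t :
  (forall x, ~ E u x -> exists l, f (P u x) = l ++ [ltr C t]) -> hasTail u t (modify u f P).
Proof.
  intros H x Hx. unfold modify. destruct (dec _) as [_|n]; auto.
  exfalso; apply n; split; auto.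
Qed.

Lemma rel_mul W u (a b : C u) : Red W ->
  act (ltr C b) (act (ltr C a) (proj W)) = act (ltr C (mmul a b)) (proj W).
Proof.
  intros HW. set (P := proj W). rewrite !act_ltr.
  destruct (tailv P u) as [t|] eqn:Ht; simpl.
  - apply tailv_some_spec in Ht.
    destruct (dec (mmul t a = mone (C u))) as [Hz|Hnz].
    + rewrite (tailv_None _ u) by (apply (no_tail_after_remove u t W); auto). simpl.
      rewrite mmulA, Hz, mmul1l.
      destruct (dec (b = mone (C u))) as [Hb|Hb].
      * rewrite modify_id. reflexivity.
      * rewrite modify_comp. reflexivity.
    + rewrite (tailv_Some _ u (mmul t a)).
      2:{ apply hasTail_mod_self. intros x Hx. eexists; reflexivity. }
      simpl. rewrite mmulA. rewrite modify_comp.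
      destruct (dec (mmul (mmul t a) b = mone (C u))) as [Hz|Hz]; apply modify_ext; intros l;
        rewrite removelast_last; reflexivity.
  - destruct (dec (a = mone (C u))) as [Ha|Ha].
    + rewrite modify_id, Ht. subst a. rewrite mmul1l. reflexivity.
    + rewrite (tailv_Some _ u a).
      2:{ apply hasTail_mod_self. intros x Hx. eexists; reflexivity. }
      simpl. rewrite modify_comp.
      destruct (dec (mmul a b = mone (C u))) as [Hz|Hz].
      * apply modify_ext; intros l; apply removelast_last.
      * apply modify_ext; intros l; rewrite removelast_last; reflexivity.
Qed.

Lemma rel_comm u u' (m : C u) (n : C u') P : E u u' ->
  act (ltr C n) (act (ltr C m) P) = act (ltr C m) (act (ltr C n) P).
Proof.
  intros Huu. rewrite !act_ltr.
  rewrite (tailv_modify_indep u' u) by (apply E_sym; auto).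
  rewrite (tailv_modify_indep u u') by auto.
  apply modify_comm. apply E_sym; auto.
Qed.

Lemma step_state w1 w2 : gp_step E w1 w2 -> state w1 = state w2.
Proof.
  intros H. destruct H as [l r u a b|l r u|l r u u' m n Huu]; unfold state; rewrite !fold_left_app;
    simpl; f_equal; fold (state l); destruct (state_inv l) as [W [HW e]]; rewrite e.
  - apply rel_mul; auto.
  - apply rel_one; auto.
  - apply rel_comm; auto.
Qed.

Lemma eq_state w1 w2 : gp_eq E w1 w2 -> state w1 = state w2.
Proof.
  intros H. induction H; auto using step_state; congruence.
Qed.

Lemma step_app_r (w1 w2 s : word C) : gp_step E w1 w2 -> gp_step E (w1 ++ s) (w2 ++ s).
Proof.
  intros H. destruct H; rewrite <- !app_assoc; simpl; constructor; auto.
Qed.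

Lemma gp_eq_app_r (w1 w2 s : word C) : gp_eq E w1 w2 -> gp_eq E (w1 ++ s) (w2 ++ s).
Proof.
  intros H. induction H.
  - apply rst_step, step_app_r; auto.
  - apply rst_refl.
  - apply rst_sym; auto.
  - eapply rst_trans; eauto.
Qed.

Lemma gp_eq_trans (w1 w2 w3 : word C) : gp_eq E w1 w2 -> gp_eq E w2 w3 -> gp_eq E w1 w3.
Proof. apply rst_trans. Qed.

Lemma gp_mul_eq (l : word C) u (a b : C u) :
  gp_eq E (l ++ [ltr C a; ltr C b]) (l ++ [ltr C (mmul a b)]).
Proof. apply rst_step. apply (gp_mul E l []). Qed.

Lemma gp_one_eq (l : word C) u : gp_eq E (l ++ [ltr C (mone (C u))]) l.
Proof.
  rewrite <- (app_nil_r l) at 2. apply rst_step. apply (gp_one E l []).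
Qed.

Lemma gp_comm_eq (l : word C) u u' (m : C u) (n : C u') : E u u' ->
  gp_eq E (l ++ [ltr C m; ltr C n]) (l ++ [ltr C n; ltr C m]).
Proof. intros H. apply rst_step. apply (gp_comm E l []); auto. Qed.

Lemma tail_decomp n : forall w : word C, length w <= n -> forall u t, hasTail u t (state w) ->
  exists w', gp_eq E w (w' ++ [ltr C t]) /\ length w' < length w.
Proof.
  induction n as [|n IH]; intros w Hlen u t Ht.
  - destruct w; [|simpl in Hlen; lia].
    destruct (Ht u (E_irr u)) as [l e]. unfold state in e; simpl in e. unfold P0 in e.
    destruct l; discriminate.
  - destruct w as [|l0 w0 _] using rev_ind.
    { destruct (Ht u (E_irr u)) as [l e]. unfold state in e; simpl in e. unfold P0 in e.
      destruct l; discriminate. }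
    rewrite length_app in Hlen; simpl in Hlen.
    destruct l0 as [u0 a]. change (existT _ u0 a) with (ltr C a) in *.
    rewrite state_snoc, act_ltr in Ht.
    rewrite length_app; simpl.
    set (P := state w0) in *.
    destruct (classic (E u u0)) as [Huu|Hnuu].
    { apply hasTail_modify_indep in Ht; auto.
      destruct (IH w0 ltac:(lia) u t Ht) as [w1 [e1 l1]].
      exists (w1 ++ [ltr C a]). split; [|rewrite length_app; simpl; lia].
      eapply gp_eq_trans. apply gp_eq_app_r; eauto. rewrite <- !app_assoc. simpl.
      apply gp_comm_eq; auto. }
    destruct (tailv P u0) as [t0|] eqn:Ht0; simpl in Ht.
    + pose proof Ht0 as Ht0e. apply tailv_some_spec in Ht0.
      destruct (IH w0 ltac:(lia) u0 t0 Ht0) as [w1 [e1 l1]].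
      assert (Hw : gp_eq E (w0 ++ [ltr C a]) (w1 ++ [ltr C (mmul t0 a)])).
      { eapply gp_eq_trans. apply gp_eq_app_r; eauto. rewrite <- !app_assoc. simpl.
        apply gp_mul_eq. }
      destruct (dec (mmul t0 a = mone (C u0))) as [Hz|Hnz].
      * rewrite Hz in Hw. eapply gp_eq_trans in Hw; [|apply rst_refl].
        assert (Hw' : gp_eq E (w0 ++ [ltr C a]) w1) by (eapply gp_eq_trans; [exact Hw| apply gp_one_eq]).
        assert (Hs : state w1 = state (w0 ++ [ltr C a])) by (symmetry; apply eq_state; auto).
        rewrite state_snoc, act_ltr in Hs. fold P in Hs. rewrite Ht0e in Hs. simpl in Hs.
        assert (Ht1 : hasTail u t (state w1)).
        { rewrite Hs. destruct (dec (mmul t0 a = mone (C u0))); [exact Ht | contradiction]. }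
        destruct (IH w1 ltac:(lia) u t Ht1) as [w2 [e2 l2]].
        exists w2. split; [eapply gp_eq_trans; eauto | lia].
      * destruct (classic (u = u0)) as [<-|Hne].
        -- destruct (Ht u (E_irr u)) as [l e]. unfold modify in e.
           destruct (dec _) as [_|n0]; [|exfalso; apply n0; split; auto].
           apply app_inj_tail in e as [_ e]. apply ltr_inj in e. subst t.
           exists w1. split; auto. lia.
        -- destruct (Ht u0 Hnuu) as [l e]. unfold modify in e.
           destruct (dec _) as [_|n0]; [|exfalso; apply n0; split; auto].
           apply app_inj_tail in e as [_ e]. apply (f_equal (@projT1 _ _)) in e.
           simpl in e. congruence.
    + destruct (dec (a = mone (C u0))) as [Ha|Ha].
      * rewrite modify_id in Ht.
        destruct (IH w0 ltac:(lia) u t Ht) as [w1 [e1 l1]].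
        exists w1. split; [|lia]. rewrite Ha. eapply gp_eq_trans; [apply gp_one_eq|auto].
      * destruct (classic (u = u0)) as [<-|Hne].
        -- destruct (Ht u (E_irr u)) as [l e]. unfold modify in e.
           destruct (dec _) as [_|n0]; [|exfalso; apply n0; split; auto].
           apply app_inj_tail in e as [_ e]. apply ltr_inj in e. subst t.
           exists w0. split; [apply rst_refl|lia].
        -- destruct (Ht u0 Hnuu) as [l e]. unfold modify in e.
           destruct (dec _) as [_|n0]; [|exfalso; apply n0; split; auto].
           apply app_inj_tail in e as [_ e]. apply (f_equal (@projT1 _ _)) in e.
           simpl in e. congruence.
Qed.

Definition T (v : V) (w : word C) : C v :=
  match tailv (state w) v with Some t => t | None => mone (C v) end.

Lemma T_inv v w1 w2 : gp_eq E w1 w2 -> T v w1 = T v w2.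
Proof. intros H. unfold T. rewrite (eq_state _ _ H). reflexivity. Qed.

Lemma T_app v w (x : C v) : T v (w ++ [ltr C x]) = mmul (T v w) x.
Proof.
  unfold T. rewrite state_snoc, act_ltr.
  destruct (state_inv w) as [W [HW eW]].
  destruct (tailv (state w) v) as [t|] eqn:Ht; simpl.
  - destruct (dec (mmul t x = mone (C v))) as [Hz|Hz].
    + rewrite (tailv_None _ v); auto. rewrite eW in *.
      apply (no_tail_after_remove v t W); auto. apply tailv_some_spec; auto.
    + rewrite (tailv_Some _ v (mmul t x)); auto.
      apply hasTail_mod_self. intros y Hy. eexists; reflexivity.
  - destruct (dec (x = mone (C v))) as [Hx|Hx].
    + rewrite modify_id, Ht, Hx, mmul1l. reflexivity.
    + rewrite (tailv_Some _ v x), mmul1l; auto.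
      apply hasTail_mod_self. intros y Hy. eexists; reflexivity.
Qed.

Lemma T_decomp v w : exists w', gp_eq E w (w' ++ [ltr C (T v w)]).
Proof.
  unfold T. destruct (tailv (state w) v) as [t|] eqn:Ht.
  - apply tailv_some_spec in Ht.
    destruct (tail_decomp (length w) w (le_n _) v t Ht) as [w' [e _]]. eauto.
  - exists w. apply rst_sym, gp_one_eq.
Qed.

End GP.

Theorem lemma2p7
  (V : Type) (E : V -> V -> Prop)
  (E_sym : forall u v, E u v -> E v u)
  (E_irr : forall v, ~ E v v)
  (C : V -> monoid) (HC : forall v, left_LCM (C v))
  (v : V) (x y : C v) :
  ((forall w : C v, ~ (in_lideal x w /\ in_lideal y w)) <->
   (forall w : word C, ~ (gp_in_lideal E (gp_of C x) w /\ gp_in_lideal E (gp_of C y) w)))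
  /\
  (forall z : C v,
     (forall w : C v, in_lideal x w /\ in_lideal y w <-> in_lideal z w) ->
     forall w : word C,
       gp_in_lideal E (gp_of C x) w /\ gp_in_lideal E (gp_of C y) w <->
       gp_in_lideal E (gp_of C z) w).
Proof.
  assert (Tx : forall (w u1 : word C) (x : C v), gp_eq E w (u1 ++ gp_of C x) ->
             T V E C v w = mmul (T V E C v u1) x).
  { intros w u1 x0 H. rewrite (T_inv V E E_sym E_irr C v _ _ H). apply (T_app V E E_sym E_irr C). }
  split; [split|].
  - intros Hdis w [[u1 H1] [u2 H2]].
    apply (Hdis (T V E C v w)). split.
    + exists (T V E C v u1). apply Tx; auto.
    + exists (T V E C v u2). apply Tx; auto.
  - intros Hdis w [[a Ha] [b Hb]]. apply (Hdis [ltr C w]). split.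
    + exists [ltr C a]. rewrite Ha. apply rst_sym, (gp_mul_eq V E C []).
    + exists [ltr C b]. rewrite Hb. apply rst_sym, (gp_mul_eq V E C []).
  - intros z Hz w. split.
    + intros [[u1 H1] [u2 H2]].
      destruct (proj1 (Hz (T V E C v w))) as [c Hc].
      { split; [exists (T V E C v u1) | exists (T V E C v u2)]; apply Tx; auto. }
      destruct (T_decomp V E E_sym E_irr C v w) as [w' Hw'].
      exists (w' ++ [ltr C c]). rewrite Hc in Hw'.
      eapply rst_trans; [exact Hw'|]. unfold gp_of. rewrite <- app_assoc. simpl.
      apply rst_sym, (gp_mul_eq V E C w').
    + intros [u Hu].
      assert (Hzz : in_lideal z z) by (exists (mone _); symmetry; apply mmul1l).
      destruct (proj2 (Hz z) Hzz) as [[a Ha] [b Hb]].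
      split.
      * exists (u ++ [ltr C a]). eapply rst_trans; [exact Hu|]. unfold gp_of.
        rewrite <- app_assoc. simpl. rewrite Ha. apply rst_sym, (gp_mul_eq V E C u).
      * exists (u ++ [ltr C b]). eapply rst_trans; [exact Hu|]. unfold gp_of.
        rewrite <- app_assoc. simpl. rewrite Hb. apply rst_sym, (gp_mul_eq V E C u).
Qed.
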